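(* Let $\mathcal X\subseteq\{0,1\}^n$, $\hat{\pmb c},\pmb d\in\mathbb R^n_{\ge0}$ and let $\Gamma\in\{0,\dots,n\}$. Then any optimal solution of the nominal problem $\min_{\pmb x\in\mathcal X}(\hat{\pmb c}+\pmb d)^t\pmb x$ is also an optimal solution of the balanced regret problem \[\min_{\pmb x\in\mathcal X}\ \max_{\pmb\delta\in\Delta(\Gamma),\,\pmb y\in\mathcal X}\ \min_{\pmb\epsilon\in\Delta(\Gamma')}\ \sum_{i\in[n]}(\hat c_i+d_i\delta_i+d_i\epsilon_i)(x_i-y_i)\] with $\Gamma'=n$.
   Context: $[n]=\{1,\dots,n\}$; for an integer $k\ge0$, $\Delta(k)=\{\pmb\delta\in\{0,1\}^n:\sum_i\delta_i\le k\}$. $\mathcal X$ is the (nonempty) set of feasible solutions of a combinatorial optimization problem, described as the intersection of a polyhedron with $\{0,1\}^n$. *)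

(* Defs.v *)
From mathcomp Require Import all_boot all_order all_algebra.
Set Implicit Arguments. Unset Strict Implicit. Unset Printing Implicit Defensive.
Import Order.TTheory GRing.Theory Num.Theory.
Local Open Scope ring_scope.

Notation bvec n := {ffun 'I_n -> bool}.

Definition bzero (n : nat) : bvec n := [ffun _ => false].

Definition Delta (n k : nat) : {set bvec n} :=
  [set dl : bvec n | (\sum_(i < n) (dl i : nat) <= k)%N].

Definition nominal (R : ringType) (n : nat) (c d : 'I_n -> R) (x : bvec n) : R :=
  \sum_(i < n) (c i + d i) * (x i : nat)%:R.

Definition regret_term (R : ringType) (n : nat) (c d : 'I_n -> R)
    (x dl y eps : bvec n) : R :=
  \sum_(i < n) (c i + d i * (dl i : nat)%:R + d i * (eps i : nat)%:R)
                 * ((x i : nat)%:R - (y i : nat)%:R).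

(* min over eps in Delta(Gamma'); the fold's default value is the term at
   eps = 0, which lies in Delta(Gamma'), so this is the true minimum. *)
Definition inner_min (R : realDomainType) (n : nat) (c d : 'I_n -> R)
    (Gamma' : nat) (x dl y : bvec n) : R :=
  \big[Num.min/regret_term c d x dl y (bzero n)]_(eps in Delta n Gamma')
      regret_term c d x dl y eps.

(* The fold's default
   value is the value at (delta, y) = (0, x), which lies in the range whenever
   x \in X, so for x \in X this is the true maximum. *)
Definition balanced_regret (R : realDomainType) (n : nat) (c d : 'I_n -> R)
    (X : {set bvec n}) (Gamma Gamma' : nat) (x : bvec n) : R :=
  \big[Num.max/inner_min c d Gamma' x (bzero n) x]_(p in setX (Delta n Gamma) X)
      inner_min c d Gamma' x p.1 p.2.

(* Main.v *)
Require Import Defs.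
From mathcomp Require Import all_boot all_order all_algebra.
From mathcomp Require Import lra.
Import Order.TTheory GRing.Theory Num.Theory.
Local Open Scope ring_scope.

Lemma bigmin_le_seq (R : realDomainType) (T : eqType) (s : seq T) (P : pred T)
  (F : T -> R) idx j : j \in s -> P j ->
  \big[Num.min/idx]_(i <- s | P i) F i <= F j.
Proof.
elim: s => // a s IH; rewrite in_cons big_cons => /orP [/eqP <-|js] Pj.
  by rewrite Pj ge_min lexx.
case: (P a); last exact: IH.
by rewrite ge_min (IH js Pj) orbT.
Qed.

Lemma bigmin_le_fin (R : realDomainType) (T : finType) (A : {set T})
  (F : T -> R) idx j : j \in A -> \big[Num.min/idx]_(i in A) F i <= F j.
Proof. by move=> jA; apply: (@bigmin_le_seq R T _ (fun i => i \in A)) => //; rewrite mem_index_enum. Qed.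

Lemma bigmax_ge_idx (R : realDomainType) (T : finType) (A : {set T})
  (F : T -> R) idx : idx <= \big[Num.max/idx]_(i in A) F i.
Proof.
elim/big_rec: _ => [|i x _ H]; first exact: lexx.
by rewrite le_max H orbT.
Qed.

Theorem theorem1 (R : realFieldType) (n : nat) (X : {set bvec n})
    (c d : 'I_n -> R) (Gamma : nat) :
  (forall i, 0 <= c i) -> (forall i, 0 <= d i) -> (Gamma <= n)%N ->
  forall x : bvec n, x \in X ->
  (forall x' : bvec n, x' \in X -> nominal c d x <= nominal c d x') ->
  forall x' : bvec n, x' \in X ->
    balanced_regret c d X Gamma n x <= balanced_regret c d X Gamma n x'.
Proof.
move=> c0 d0 _ x xX opt x' x'X.
have rt0 : forall z dl eps, regret_term c d z dl z eps = 0.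
  move=> z dl eps; rewrite /regret_term big1 // => i _; by rewrite subrr mulr0.
have im0 : forall z dl, inner_min c d n z dl z = 0.
  move=> z dl; rewrite /inner_min.
  elim/big_ind: _; first by apply: rt0.
    by move=> a b -> ->; rewrite minxx.
  by move=> i _; apply: rt0.
apply: (@le_trans _ _ 0).
  rewrite /balanced_regret.
  elim/big_ind: _ => //; first by rewrite im0.
    by move=> a b ha hb; rewrite ge_max ha hb.
  case=> dl y /setXP [dlD yX] /=.
  set e : bvec n := [ffun i => ~~ x i && y i].
  have eD : e \in Delta n n.
    rewrite inE; apply: (@leq_trans (\sum_(i < n) 1)%N).
      by apply: leq_sum => i _; apply: leq_b1.
    by rewrite sum1_card card_ord.
  rewrite /inner_min.
  apply: le_trans (@bigmin_le_fin R _ _ (regret_term c d x dl y) (regret_term c d x dl y (bzero n)) e eD) _.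
  apply: (@le_trans _ _ (nominal c d x - nominal c d y)); last first.
    by rewrite subr_le0 opt.
  rewrite /regret_term /nominal -sumrB; apply: ler_sum => i _.
  rewrite /e ffunE -mulrBr.
  have := c0 i; have := d0 i.
  case: (x i); case: (y i); case: (dl i) => /=; rewrite ?subrr ?mulr0 ?mulr1 ?subr0 ?sub0r ?addr0 ?mulrN1 ?lexx //;
    move=> *; rewrite ?lerN2; lra.
rewrite /balanced_regret; apply: le_trans (@bigmax_ge_idx R _ (setX (Delta n Gamma) X) (fun p => inner_min c d n x' p.1 p.2) (inner_min c d n x' (bzero n) x')).
by rewrite im0.
Qed.
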